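(* Let $p_1,p_2,q$ be non-negative integers, $k$ an integer and $x_1,x_2\in\mathbb{C}$. Define rational functions $\mathcal{R}_{\mu,k}(y)$ for integers $\mu\ge -1$ by $\mathcal{R}_{-1,k}(y)=-1$ and, for $\mu\ge 0$, $$\mathcal{R}_{\mu,k}(y)=y(y+\mu+2)^{k}\mathcal{R}_{\mu-1,k}(y)-(y+1)^{k+1}\mathcal{R}_{\mu-1,k}(y+1).$$ Then $$\sum_{l=0}^{q}\binom{q}{l}(-x_1)^{q-l}B^{(k)}_{p_1+l,p_2}(x_1,x_2)=\sum_{l=0}^{q}\binom{q}{l}(-x_2)^{q-l}B^{(k)}_{p_1,p_2+l}(x_1,x_2)=-\sum_{l=0}^{p_1+p_2}S_{1,x_1}^{1,x_2,p_2}(p_1,l)\,\frac{(-1)^{l}\,l!\,\mathcal{R}_{q-1,k}(l)}{\left(\prod_{i=1}^{q+1}(l+i)\right)^{k}}.$$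
   Context: For non-negative integers $p_1,p_2,l$ and $x_1,x_2\in\mathbb{C}$, the generalized Stirling numbers are $$S_{1,x_1}^{1,x_2,p_2}(p_1,l)=\frac{1}{l!}\sum_{j=0}^{l}(-1)^{j}\binom{l}{j}(l-j+x_1)^{p_1}(l-j+x_2)^{p_2}.$$ For an integer $k$, the bi-variate poly-Bernoulli polynomial is $$B^{(k)}_{p_1,p_2}(x_1,x_2)=\sum_{l=0}^{p_1+p_2}S_{1,x_1}^{1,x_2,p_2}(p_1,l)\frac{(-1)^{l}\,l!}{(l+1)^{k}}.$$ *)

(* Defs.v *)
From HB Require Import structures.
From mathcomp Require Import all_boot all_order all_algebra.
From mathcomp Require Import reals.
From mathcomp Require Export complex.
Set Implicit Arguments. Unset Strict Implicit. Unset Printing Implicit Defensive.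
Import Order.TTheory GRing.Theory Num.Theory.
Local Open Scope ring_scope.

Section Defs.
Variable F : fieldType.

Definition gstirling (p1 p2 l : nat) (x1 x2 : F) : F :=
  (l`!%:R)^-1 * \sum_(j < l.+1)
     ((-1) ^+ j * 'C(l, j)%:R * ((l - j)%:R + x1) ^+ p1 * ((l - j)%:R + x2) ^+ p2).

Definition polyBern (k : int) (p1 p2 : nat) (x1 x2 : F) : F :=
  \sum_(l < (p1 + p2).+1)
     gstirling p1 p2 l x1 x2 * ((-1) ^+ l * l`!%:R / (l.+1%:R ^ k)).

(* Rcal n k y = \mathcal{R}_{n-1,k}(y) (index shifted by one):
   Rcal 0 = R_{-1} = -1 ;
   R_{mu,k}(y) = y (y+mu+2)^k R_{mu-1,k}(y) - (y+1)^{k+1} R_{mu-1,k}(y+1). *)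
Fixpoint Rcal (n : nat) (k : int) (y : F) : F :=
  match n with
  | 0 => -1
  | m.+1 => y * (y + (m + 2)%:R) ^ k * Rcal m k y
            - (y + 1) ^ (k + 1) * Rcal m k (y + 1)
  end.
End Defs.

(* Main.v *)
Require Import Defs.
From HB Require Import structures.
From mathcomp Require Import all_boot all_order all_algebra.
From mathcomp Require Import reals complex.
From mathcomp Require Import ring zify.
Import Order.TTheory GRing.Theory Num.Theory.
Local Open Scope ring_scope.

Section Aux.
Variable F : numFieldType.

Definition Dd (g : nat -> F) (l : nat) : F :=
  \sum_(j < l.+1) (-1) ^+ j * 'C(l, j)%:R * g (l - j)%N.

Lemma Dd_ext g h l : (forall m, g m = h m) -> Dd g l = Dd h l.
Proof. by move=> e; apply: eq_bigr => j _; rewrite e. Qed.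

Lemma Dd_lin a b g h l :
  Dd (fun m => a * g m + b * h m) l = a * Dd g l + b * Dd h l.
Proof.
rewrite /Dd !mulr_sumr -big_split /=; apply: eq_bigr => j _; ring.
Qed.

Lemma Dd_sum n (c : nat -> F) (h : nat -> nat -> F) l :
  Dd (fun m => \sum_(i < n) c i * h i m) l = \sum_(i < n) c i * Dd (h i) l.
Proof.
rewrite /Dd; under eq_bigr do rewrite mulr_sumr.
rewrite exchange_big /=; apply: eq_bigr => i _.
rewrite mulr_sumr; apply: eq_bigr => j _; ring.
Qed.

Lemma Dd_shift g n :
  \sum_(j < n.+2) (-1) ^+ j * 'C(n, j)%:R * g (n.+1 - j)%N = Dd g n.+1 + Dd g n.
Proof.
rewrite /Dd big_ord_recl [in X in _ = X + _]big_ord_recl /= !subn0 !bin0.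
rewrite -addrA; congr (_ + _).
rewrite -big_split /=; apply: eq_bigr => j _.
rewrite /bump /= add1n subSS binS natrD exprS; ring.
Qed.

Lemma Dd_mulX g l :
  Dd (fun m => m%:R * g m) l = l%:R * (Dd g l + Dd g l.-1).
Proof.
case: l => [|n]; first by rewrite /Dd big_ord1 /= !mul0r mulr0.
rewrite -Dd_shift /Dd mulr_sumr; apply: eq_bigr => j _.
have := mul_bin_down n.+1 j => /= /(congr1 (fun t => t%:R : F)).
rewrite !natrM => e.
transitivity ((-1) ^+ j * ((n.+1 - j)%:R * 'C(n.+1, j)%:R) * g (n.+1 - j)%N).
  by ring.
rewrite -e; ring.
Qed.

Definition vanish g L := forall l, (L < l)%N -> Dd g l = 0.

Lemma vanish1 : vanish (fun _ => 1) 0.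
Proof.
case=> // n _; rewrite /Dd.
have := exprDn (1 : F) (-1) n.+1; rewrite subrr expr0n /= => e.
apply: esym; apply: (etrans e); apply: eq_bigr => j _.
by rewrite expr1n mul1r mulr1 mulr_natr.
Qed.

Lemma vanish_mul g L x : vanish g L -> vanish (fun m => g m * (m%:R + x)) L.+1.
Proof.
move=> v l lt.
rewrite (@Dd_ext _ (fun m => 1 * (m%:R * g m) + x * g m)); last by move=> m; ring.
rewrite Dd_lin Dd_mulX (v l) ?(v l.-1); first by ring.
- by case: l lt => // l; rewrite ltnS.
- by apply: ltn_trans lt.
Qed.

Lemma vanish_pow g L x a :
  vanish g L -> vanish (fun m => g m * (m%:R + x) ^+ a) (L + a).
Proof.
move=> v; elim: a => [|a IH].
  by move=> l; rewrite addn0 => lt; rewrite (@Dd_ext _ (g)) ?v // => m; rewrite mulr1.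
move=> l; rewrite addnS => lt.
rewrite (@Dd_ext _ (fun m => (g m * (m%:R + x) ^+ a) * (m%:R + x))).
  exact: (vanish_mul _ _ x IH l lt).
by move=> m; rewrite exprSr mulrA.
Qed.

Definition Ss N g (w : nat -> F) := \sum_(l < N.+1) (-1) ^+ l * Dd g l * w l.
Definition Tt (w : nat -> F) l := l%:R * w l - l.+1%:R * w l.+1.

Lemma Ss_fext N g h w : (forall m, g m = h m) -> Ss N g w = Ss N h w.
Proof. by move=> e; apply: eq_bigr => l _; rewrite (@Dd_ext _ h). Qed.

Lemma Ss_ext g L N w : vanish g L -> (L <= N)%N -> Ss N g w = Ss L g w.
Proof.
move=> v; elim: N => [|N IH].
  by rewrite leqn0 => /eqP ->.
rewrite leq_eqVlt => /orP [/eqP -> //|].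
rewrite ltnS => le; rewrite /Ss big_ord_recr /= -/(Ss N g w) IH //.
by rewrite (v N.+1) ?ltnS // mulr0 mul0r addr0.
Qed.

Lemma Ss_mulX N g w :
  Ss N (fun m => m%:R * g m) w = Ss N g (Tt w) + (-1) ^+ N * N.+1%:R * Dd g N * w N.+1.
Proof.
elim: N => [|N IH].
  by rewrite /Ss !big_ord1 /= Dd_mulX /Tt /=; ring.
rewrite /Ss big_ord_recr /= -/(Ss N _ w) IH.
rewrite [in RHS]big_ord_recr /= -/(Ss N g (Tt w)) Dd_mulX /Tt /= !exprS; ring.
Qed.

Lemma Ss_chain g L : vanish g L ->
  forall q w, Ss (L + q) (fun m => g m * m%:R ^+ q) w = Ss L g (iter q Tt w).
Proof.
move=> v q; elim: q => [|q IH] w.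
  by rewrite addn0 /Ss; apply: eq_bigr => l _; rewrite (@Dd_ext _ (g)) // => m; rewrite mulr1.
have vq : vanish (fun m => g m * m%:R ^+ q) (L + q).
  move=> l lt; rewrite (@Dd_ext _ (fun m => g m * (m%:R + 0) ^+ q)).
    exact: (vanish_pow _ _ 0 q v l lt).
  by move=> m; rewrite addr0.
rewrite addnS (@Ss_fext _ _ (fun m => m%:R * (g m * m%:R ^+ q))); last first.
  by move=> m; rewrite exprSr; ring.
rewrite Ss_mulX (vq (L + q).+1) // mulr0 mul0r addr0.
by rewrite (@Ss_ext _ (L + q)) // IH iterSr.
Qed.

Lemma natS_neq0 n : (n.+1%:R : F) != 0.
Proof. by rewrite pnatr_eq0. Qed.

Definition Pp q l : F := \prod_(1 <= i < q.+2) (l + i)%:R.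

Lemma Pp_neq0 q l : Pp q l != 0.
Proof.
rewrite /Pp; elim: q => [|q IH]; first by rewrite big_nat1 addn1 natS_neq0.
by rewrite big_nat_recr //= mulf_neq0 // addnS natS_neq0.
Qed.

Lemma PpSr q l : Pp q.+1 l = Pp q l * (l%:R + (q + 2)%:R).
Proof. by rewrite /Pp big_nat_recr //= natrD addn2. Qed.

Lemma PpSl q l : Pp q.+1 l = l.+1%:R * Pp q l.+1.
Proof.
rewrite /Pp big_nat_recl //= addn1; congr (_ * _).
by apply: eq_bigr => i _; rewrite addnS addSn.
Qed.

Definition w0 (k : int) l : F := (l.+1%:R ^ k)^-1.

Lemma aux_field (lf a R1 R2 Ka Kb C A : F) :
  Ka != 0 -> C != 0 -> A != 0 -> Kb = Ka * C / A ->
  lf * (- R1 / Ka) - a * (- R2 / Kb) = - (lf * C * R1 - A * a * R2) / (Ka * C).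
Proof. by move=> h1 h2 h3 ->; field; rewrite h1 h2 h3. Qed.

Lemma W_formula k q l :
  iter q Tt (w0 k) l = - Rcal q k (l%:R : F) / (Pp q l) ^ k.
Proof.
elim: q l => [|q IH] l.
  by rewrite /= /w0 /Pp big_nat1 addn1 opprK mul1r.
rewrite iterS /Tt !IH /= natr1 PpSr expfzMl.
have nz : (l.+1%:R : F) != 0 by exact: natS_neq0.
rewrite expfzDr // expr1z.

apply: aux_field.
- exact: expfz_neq0 (Pp_neq0 _ _).
- apply: expfz_neq0; rewrite -natrD addn2 addnS; exact: natS_neq0.
- exact: expfz_neq0.
- have := PpSl q l; rewrite PpSr => e.
  rewrite -expfzMl e expfzMl mulrC mulKf //; exact: expfz_neq0.
Qed.

Lemma Ss_sum N n (c : nat -> F) (h : nat -> nat -> F) w :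
  Ss N (fun m => \sum_(i < n) c i * h i m) w = \sum_(i < n) c i * Ss N (h i) w.
Proof.
rewrite /Ss; under eq_bigr do rewrite Dd_sum mulr_sumr mulr_suml.
rewrite exchange_big /=; apply: eq_bigr => i _.
rewrite mulr_sumr; apply: eq_bigr => j _; ring.
Qed.

Variables x1 x2 : F.
Definition ff a b m : F := (m%:R + x1) ^+ a * (m%:R + x2) ^+ b.

Lemma vanish_ff a b : vanish (ff a b) (a + b).
Proof.
have v1 := vanish_pow _ _ x1 a vanish1.
have v2 := vanish_pow _ _ x2 b v1.
move=> l lt; rewrite (@Dd_ext _ (fun m => 1 * (m%:R + x1) ^+ a * (m%:R + x2) ^+ b)).
  by apply: v2; rewrite add0n.
by move=> m; rewrite /ff mul1r.
Qed.

Lemma polyBern_Ss k a b : polyBern k a b x1 x2 = Ss (a + b) (ff a b) (w0 k).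
Proof.
rewrite /polyBern /Ss; apply: eq_bigr => l _.
rewrite /gstirling /Dd /w0.
have : (l`!%:R : F) != 0 by rewrite pnatr_eq0 -lt0n fact_gt0.
set D := \sum_(j < l.+1) _; set D' := \sum_(j < l.+1) _.
have -> : D = D' by apply: eq_bigr => j _; rewrite /ff !mulrA.
move=> nz; field; rewrite nz andbT.
apply: expfz_neq0; exact: natS_neq0.
Qed.

Lemma binom1 p1 p2 q N w :
  \sum_(l < q.+1) 'C(q, l)%:R * (- x1) ^+ (q - l) * Ss N (ff (p1 + l) p2) w
  = Ss N (fun m => ff p1 p2 m * m%:R ^+ q) w.
Proof.
rewrite -(Ss_sum N q.+1 (fun l => 'C(q, l)%:R * (- x1) ^+ (q - l)) (fun l => ff (p1 + l) p2)).
apply: Ss_fext => m.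
rewrite (_ : m%:R ^+ q = (- x1 + (m%:R + x1)) ^+ q); last by congr (_ ^+ _); ring.
rewrite exprDn mulr_sumr; apply: eq_bigr => i _.
rewrite /ff exprD -mulr_natr; ring.
Qed.

Lemma binom2 p1 p2 q N w :
  \sum_(l < q.+1) 'C(q, l)%:R * (- x2) ^+ (q - l) * Ss N (ff p1 (p2 + l)) w
  = Ss N (fun m => ff p1 p2 m * m%:R ^+ q) w.
Proof.
rewrite -(Ss_sum N q.+1 (fun l => 'C(q, l)%:R * (- x2) ^+ (q - l)) (fun l => ff p1 (p2 + l))).
apply: Ss_fext => m.
rewrite (_ : m%:R ^+ q = (- x2 + (m%:R + x2)) ^+ q); last by congr (_ ^+ _); ring.
rewrite exprDn mulr_sumr; apply: eq_bigr => i _.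
rewrite /ff exprD -mulr_natr; ring.
Qed.

Lemma gen_main p1 p2 q (k : int) :
  \sum_(l < q.+1) 'C(q, l)%:R * (- x1) ^+ (q - l) * polyBern k (p1 + l) p2 x1 x2
  = \sum_(l < q.+1) 'C(q, l)%:R * (- x2) ^+ (q - l) * polyBern k p1 (p2 + l) x1 x2
  /\
  \sum_(l < q.+1) 'C(q, l)%:R * (- x2) ^+ (q - l) * polyBern k p1 (p2 + l) x1 x2
  = - \sum_(l < (p1 + p2).+1)
        gstirling p1 p2 l x1 x2 *
        ((-1) ^+ l * l`!%:R * Rcal q k (l%:R : F)
         / ((\prod_(1 <= i < q.+2) (l + i)%:R : F) ^ k)).
Proof.
have E1 : \sum_(l < q.+1) 'C(q, l)%:R * (- x1) ^+ (q - l) * polyBern k (p1 + l) p2 x1 x2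
   = Ss (p1 + p2) (ff p1 p2) (iter q Tt (w0 k)).
  rewrite -Ss_chain; last exact: vanish_ff.
  rewrite -binom1; apply: eq_bigr => l _.
  rewrite polyBern_Ss -(@Ss_ext _ (p1 + l + p2) (p1 + p2 + q)) //.
    exact: vanish_ff.
  by have := ltn_ord l; lia.
have E2 : \sum_(l < q.+1) 'C(q, l)%:R * (- x2) ^+ (q - l) * polyBern k p1 (p2 + l) x1 x2
   = Ss (p1 + p2) (ff p1 p2) (iter q Tt (w0 k)).
  rewrite -Ss_chain; last exact: vanish_ff.
  rewrite -binom2; apply: eq_bigr => l _.
  rewrite polyBern_Ss -(@Ss_ext _ (p1 + (p2 + l)) (p1 + p2 + q)) //.
    exact: vanish_ff.
  by have := ltn_ord l; lia.
rewrite E1 E2; split => //.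
rewrite /Ss -sumrN; apply: eq_bigr => l _.
rewrite W_formula /gstirling /Dd.
have : (l`!%:R : F) != 0 by rewrite pnatr_eq0 -lt0n fact_gt0.
set D := \sum_(j < l.+1) _; set D' := \sum_(j < l.+1) _.
have -> : D' = D by apply: eq_bigr => j _; rewrite /ff !mulrA.
have := Pp_neq0 q l; rewrite /Pp => nzP.
move=> nz; field; rewrite nz andbT.
exact: expfz_neq0.
Qed.
End Aux.

Theorem proposition4p2 (R : realType) (p1 p2 q : nat) (k : int) (x1 x2 : R[i]) :
  \sum_(l < q.+1) 'C(q, l)%:R * (- x1) ^+ (q - l) * polyBern k (p1 + l) p2 x1 x2
  = \sum_(l < q.+1) 'C(q, l)%:R * (- x2) ^+ (q - l) * polyBern k p1 (p2 + l) x1 x2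
  /\
  \sum_(l < q.+1) 'C(q, l)%:R * (- x2) ^+ (q - l) * polyBern k p1 (p2 + l) x1 x2
  = - \sum_(l < (p1 + p2).+1)
        gstirling p1 p2 l x1 x2 *
        ((-1) ^+ l * l`!%:R * Rcal q k (l%:R : R[i])
         / ((\prod_(1 <= i < q.+2) (l + i)%:R : R[i]) ^ k)).
Proof. exact: (@gen_main R[i] x1 x2 p1 p2 q k). Qed.
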